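(* Let $I$ be a nonempty set and $\mathbf{Lat}_I$ the category of $I$-complete lattices. Then $\mathbf{Lat}_I$ has 2-fold subobject decompositions over $I$: for any family $(L_i)_{i\in I}$ of $I$-complete lattices and any two $I$-complete sublattices $S,T$ of $\prod_{i\in I}L_i$, if for all $i,j\in I$ the images of $S$ and $T$ under the projection $\prod_{i\in I}L_i\to L_i\times L_j$ coincide, then $S=T$.
   Context: An $I$-complete lattice is a lattice in which every family $(x_i)_{i\in I}$ of elements has a meet and a join; a homomorphism of $I$-complete lattices is a map preserving meets and joins of $I$-indexed families; $\mathbf{Lat}_I$ is the resulting category. Products are computed componentwise and subobjects are $I$-complete sublattices (subsets closed under $I$-indexed meets and joins). *)

(* Defs.v *)
Set Implicit Arguments.

Definition is_glb (L K : Type) (le : L -> L -> Prop) (x : K -> L) (m : L) : Prop :=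
  (forall k, le m (x k)) /\ (forall y, (forall k, le y (x k)) -> le y m).
Definition is_lub (L K : Type) (le : L -> L -> Prop) (x : K -> L) (m : L) : Prop :=
  (forall k, le (x k) m) /\ (forall y, (forall k, le (x k) y) -> le m y).

Record ICLat (I : Type) := {
  carrier :> Type;
  le : carrier -> carrier -> Prop;
  le_refl : forall x, le x x;
  le_antisym : forall x y, le x y -> le y x -> x = y;
  le_trans : forall x y z, le x y -> le y z -> le x z;
  meet2 : carrier -> carrier -> carrier;
  join2 : carrier -> carrier -> carrier;
  meet2_glb : forall x y, is_glb le (fun b : bool => if b then x else y) (meet2 x y);
  join2_lub : forall x y, is_lub le (fun b : bool => if b then x else y) (join2 x y);
  meetI : (I -> carrier) -> carrier;
  joinI : (I -> carrier) -> carrier;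
  meetI_glb : forall x : I -> carrier, is_glb le x (meetI x);
  joinI_lub : forall x : I -> carrier, is_lub le x (joinI x)
}.

Definition prod_meetI (I : Type) (L : I -> ICLat I)
  (x : I -> forall i, L i) : forall i, L i :=
  fun i => meetI (L i) (fun k => x k i).
Definition prod_joinI (I : Type) (L : I -> ICLat I)
  (x : I -> forall i, L i) : forall i, L i :=
  fun i => joinI (L i) (fun k => x k i).

Definition is_ICsublattice (I : Type) (L : I -> ICLat I)
  (S : (forall i, L i) -> Prop) : Prop :=
  forall x : I -> forall i, L i, (forall k, S (x k)) ->
    S (prod_meetI L x) /\ S (prod_joinI L x).

Definition proj2_image (I : Type) (L : I -> ICLat I)
  (S : (forall i, L i) -> Prop) (i j : I) : L i * L j -> Prop :=
  fun p => exists x, S x /\ p = (x i, x j).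

(* Main.v *)
Require Import Defs.
From Stdlib Require Import FunctionalExtensionality PropExtensionality ClassicalEpsilon.

Lemma meet_const (I : Type) (M : ICLat I) (a : M) (k0 : I) :
  meetI M (fun _ => a) = a.
Proof.
  destruct (meetI_glb M (fun _ => a)) as [H1 H2].
  apply le_antisym; [apply (H1 k0) | apply H2; intros; apply le_refl].
Qed.

Lemma incl (I : Type) (L : I -> ICLat I) (S T : (forall i, L i) -> Prop) :
  is_ICsublattice L T ->
  (forall i j : I, forall p, proj2_image L S i j p -> proj2_image L T i j p) ->
  forall x, S x -> T x.
Proof.
  intros HT Him x Sx.
  assert (Hy : forall ij : I * I, exists y, T y /\ y (fst ij) = x (fst ij) /\ y (snd ij) = x (snd ij)).
  { intros [i j]. destruct (Him i j (x i, x j)) as [y [Ty Ey]].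
    - exists x; split; auto.
    - injection Ey; intros; exists y; simpl; auto. }
  pose (y := fun ij => proj1_sig (constructive_indefinite_description _ (Hy ij))).
  assert (Py : forall ij, T (y ij) /\ y ij (fst ij) = x (fst ij) /\ y ij (snd ij) = x (snd ij))
    by (intro ij; unfold y; destruct constructive_indefinite_description; auto).
  pose (z := fun i => prod_meetI L (fun j => y (i, j))).
  assert (Tz : forall i, T (z i)) by (intro i; apply HT; intro k; apply Py).
  assert (zi : forall i, z i i = x i).
  { intro i. unfold z, prod_meetI.
    replace (fun k => y (i, k) i) with (fun _ : I => x i).
    - apply meet_const; exact i.
    - apply functional_extensionality; intro k. symmetry; apply (Py (i, k)). }
  assert (zle : forall i k, le (L k) (z i k) (x k)).
  { intros i k. unfold z, prod_meetI.
    destruct (meetI_glb (L k) (fun j => y (i, j) k)) as [H1 _].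
    pose proof (proj2 (proj2 (Py (i, k)))) as E; simpl in E. rewrite <- E. apply H1. }
  assert (Tw : T (prod_joinI L z)) by (apply HT; exact Tz).
  replace x with (prod_joinI L z); [exact Tw|].
  apply functional_extensionality_dep; intro k. unfold prod_joinI.
  destruct (joinI_lub (L k) (fun i => z i k)) as [H1 H2].
  apply le_antisym.
  - apply H2; intro i; apply zle.
  - rewrite <- (zi k) at 1. apply (H1 k).
Qed.

Theorem proposition4p10 (I : Type) (HI : inhabited I) (L : I -> ICLat I)
  (S T : (forall i, L i) -> Prop) :
  is_ICsublattice L S -> is_ICsublattice L T ->
  (forall i j : I, proj2_image L S i j = proj2_image L T i j) ->
  S = T.
Proof.
  intros HS HT E.
  apply functional_extensionality; intro x.
  apply propositional_extensionality; split.
  - apply (@incl I L S T HT). intros i j p; rewrite E; auto.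
  - apply (@incl I L T S HS). intros i j p; rewrite E; auto.
Qed.
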